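(* Fix an integer $k\ge0$. For real numbers $2\le y\le x$, $$\Phi_k(x,y)=\Psi(x,P_k)+O\left(\frac{x(\log x)^{2k}}{y}\right),$$ where the implied constant depends only on $k$.
   Context: $\phi$ is Euler's function, $\phi_0(n)=n$, $\phi_{k+1}(n)=\phi(\phi_k(n))$. $\Phi_k(x,y)=\#\{n\le x:\ p\mid\phi_k(n)\Rightarrow p\le y\}$ ($p$ prime). For a set $P$ of primes, $\Psi(x,P)=\#\{n\le x:\ p\mid n\Rightarrow p\in P\}$. The sets of primes $P_k$ are defined by $P_0=\{p\le y\}$ and $P_{k+1}=\{p\le x \text{ prime}:\ q\mid p-1\Rightarrow q\in P_k\}$. *)

(* Defs.v *)
From Stdlib Require Import Reals.
From mathcomp Require Import all_boot.

Set Implicit Arguments.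
Unset Strict Implicit.
Unset Printing Implicit Defensive.

Definition leRb (n : nat) (r : R) : bool :=
  if Rle_dec (INR n) r then true else false.

Definition phi_iter (k n : nat) : nat := iter k totient n.

Fixpoint Pset (x y : R) (k : nat) (p : nat) : bool :=
  match k with
  | 0 => prime p && leRb p y
  | k'.+1 => [&& prime p, leRb p x & all (Pset x y k') (primes p.-1)]
  end.

Definition Phi (k : nat) (x y : R) : nat :=
  count (fun n => [&& 0 < n, leRb n x &
                      all (fun p => leRb p y) (primes (phi_iter k n))])
        (iota 0 (Z.to_nat (up x))).

Definition Psi (x : R) (P : nat -> bool) : nat :=
  count (fun n => [&& 0 < n, leRb n x & all P (primes n)])
        (iota 0 (Z.to_nat (up x))).

(* Main.v *)
Require Import Defs.
From Stdlib Require Import Reals.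
From mathcomp Require Import all_boot.
From Stdlib Require Import Lra Lia Psatz.
From mathcomp Require Import zify.

Lemma totient_le n : totient n <= n.
Proof.
rewrite totient_count_coprime.
apply: (@leq_trans (\sum_(0 <= d < n) 1)).
  by apply: leq_sum => i _; exact: leq_b1.
by rewrite sum_nat_const_nat muln1 subn0.
Qed.

Lemma phi_iterS i n : phi_iter i.+1 n = totient (phi_iter i n).
Proof. by rewrite /phi_iter iterS. Qed.

Lemma phi_iter_le i n : phi_iter i n <= n.
Proof. elim: i => [//|i IH]; rewrite phi_iterS; exact: leq_trans (totient_le _) IH. Qed.

Lemma phi_iter_gt0 i n : 0 < n -> 0 < phi_iter i n.
Proof. move=> n0; elim: i => [//|i IH]; by rewrite phi_iterS totient_gt0. Qed.

Lemma dvd_pm1_totient p m : prime p -> p %| m -> 0 < m -> p.-1 %| totient m.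
Proof.
move=> pp pm m0; rewrite totientE //.
have pin : p \in primes m by rewrite mem_primes pp m0 pm.
rewrite (big_rem p pin) /=.
by apply: dvdn_mulr; apply: dvdn_mulr.
Qed.

Lemma logn_prod (r : nat) (s : seq nat) (F : nat -> nat) :
  (forall p, p \in s -> 0 < F p) ->
  logn r (\prod_(p <- s) F p) = \sum_(p <- s) logn r (F p).
Proof.
elim: s => [|a s IH] H; first by rewrite !big_nil logn1.
have Hs : forall p, p \in s -> 0 < F p by move=> p ps; apply: H; rewrite inE ps orbT.
rewrite !big_cons lognM ?IH //.
- by apply: H; rewrite inE eqxx.
- by rewrite big_seq; apply: prodn_cond_gt0 => p; exact: Hs.
Qed.

Lemma logn_totient r N : prime r -> 0 < N ->
  logn r (totient N) = \sum_(p <- primes N) (logn r p.-1 + (p == r) * (logn p N).-1).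
Proof.
move=> pr N0; rewrite totientE // logn_prod.
  apply: eq_big_seq => p; rewrite mem_primes => /and3P [pp _ _].
  have p1 := prime_gt1 pp.
  rewrite lognM; [ | lia | by rewrite expn_gt0 prime_gt0].
  by rewrite lognX (logn_prime r pp) mulnC eq_sym.
move=> p; rewrite mem_primes => /and3P [pp _ _].
have p1 := prime_gt1 pp.
rewrite muln_gt0 expn_gt0 (prime_gt0 pp) andbT; lia.
Qed.

Lemma sum_ge1 (s : seq nat) f : 0 < \sum_(p <- s) f p -> exists p, p \in s /\ 0 < f p.
Proof.
elim: s => [|a s IH]; first by rewrite big_nil.
rewrite big_cons; case: (posnP (f a)) => [fa|fa] H.
  have : 0 < \sum_(p <- s) f p by lia.
  move=> /IH [p [ps fp]].
  by exists p; rewrite inE ps orbT.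
by exists a; rewrite inE eqxx.
Qed.

Lemma sum_ge2 (s : seq nat) f : uniq s -> 1 < \sum_(p <- s) f p ->
  (exists p, p \in s /\ 1 < f p) \/
  exists p1 p2, [/\ p1 \in s, p2 \in s, p1 != p2, 0 < f p1 & 0 < f p2].
Proof.
elim: s => [|a s IH]; first by rewrite big_nil.
rewrite big_cons /= => /andP [as_ us] H.
case: (ltnP 1 (f a)) => fa.
  by left; exists a; rewrite inE eqxx.
case: (posnP (f a)) => fa0.
  have : 1 < \sum_(p <- s) f p by lia.
  move=> /(IH us) [[p [ps fp]]|[p1 [p2 [h1 h2 h3 h4 h5]]]].
    by left; exists p; rewrite inE ps orbT.
  by right; exists p1, p2; rewrite !inE h1 h2 !orbT.
have : 0 < \sum_(p <- s) f p by lia.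
move=> /sum_ge1 [p [ps fp]].
right; exists a, p; split; rewrite ?inE ?eqxx ?ps ?orbT //.
by apply/eqP => ap; move: as_; rewrite ap ps.
Qed.

Lemma pm1_gt0 p : prime p -> 0 < p.-1.
Proof. move=> pp; have := prime_gt1 pp; lia. Qed.

Lemma logn_tot_simpl r N : prime r -> 0 < N -> logn r N <= 1 ->
  logn r (totient N) = \sum_(p <- primes N) logn r p.-1.
Proof.
move=> pr N0 l1; rewrite logn_totient //; apply: eq_bigr => p _.
case: eqP => [->|_]; last by rewrite mul0n addn0.
rewrite mul1n. have -> : (logn r N).-1 = 0 by lia. by rewrite addn0.
Qed.

Lemma case_a r N : prime r -> 0 < N -> r %| totient N ->
  r * r %| N \/ exists p, [/\ prime p, p %| N & r %| p.-1].
Proof.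
move=> pr N0 rt.
case: (ltnP 1 (logn r N)) => l.
  by left; rewrite mulnn pfactor_dvdn.
right.
have t0 : 0 < totient N by rewrite totient_gt0.
have : 0 < logn r (totient N) by rewrite -[r %| _]/(r ^ 1 %| _) pfactor_dvdn // in rt.
rewrite logn_tot_simpl // => /sum_ge1 [p [pin lp]].
move: pin; rewrite mem_primes => /and3P [pp _ pN].
exists p; split => //.
by rewrite -[r %| _]/(r ^ 1 %| _) pfactor_dvdn // pm1_gt0.
Qed.

Lemma cop_pr p q : prime p -> prime q -> p != q -> coprime p q.
Proof. by move=> pp pq npq; rewrite prime_coprime // dvdn_prime2 //. Qed.

Lemma dvd_mul_pr p q N : prime p -> prime q -> p != q -> p %| N -> q %| N -> p * q %| N.
Proof. by move=> pp pq npq h1 h2; rewrite Gauss_dvd ?cop_pr ?h1. Qed.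

Lemma case_b r N : prime r -> 0 < N -> r * r %| totient N ->
  r * r %| N \/ (exists p, [/\ prime p, p %| N & r * r %| p.-1]) \/
  exists p1 p2, [/\ prime p1, prime p2, p1 != p2, p1 * p2 %| N & r %| p1.-1 /\ r %| p2.-1].
Proof.
move=> pr N0 rt.
case: (ltnP 1 (logn r N)) => l.
  by left; rewrite mulnn pfactor_dvdn.
right.
have t0 : 0 < totient N by rewrite totient_gt0.
have : 1 < logn r (totient N) by rewrite mulnn pfactor_dvdn // in rt.
rewrite logn_tot_simpl // => /(@sum_ge2 (primes N) _ (primes_uniq N)) [[p [pin lp]]|[p1 [p2 [h1 h2 h3 h4 h5]]]].
  move: pin; rewrite mem_primes => /and3P [pp _ pN].
  left; exists p; split => //.
  by rewrite mulnn pfactor_dvdn // pm1_gt0.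
move: h1 h2; rewrite !mem_primes => /and3P [pp1 _ pN1] /and3P [pp2 _ pN2].
right; exists p1, p2; split => //; first exact: dvd_mul_pr.
by split; rewrite -[r %| _]/(r ^ 1 %| _) pfactor_dvdn // pm1_gt0.
Qed.

Lemma case_c a b N : prime a -> prime b -> a != b -> 0 < N -> a * b %| totient N ->
  a * b %| N \/ (a * a %| N /\ b < a) \/ (b * b %| N /\ a < b) \/
  (exists p, [/\ prime p, p != a, b %| p.-1 & a * p %| N]) \/
  (exists p, [/\ prime p, p != b, a %| p.-1 & b * p %| N]) \/
  (exists p, [/\ prime p, a * b %| p.-1 & p %| N]) \/
  exists p1 p2, [/\ prime p1, prime p2, p1 != p2, a %| p1.-1 & b %| p2.-1 /\ p1 * p2 %| N].
Proof.
move=> pa pb nab N0 abt.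
have at_ : a %| totient N by apply: dvdn_trans abt; apply: dvdn_mulr.
have bt : b %| totient N by apply: dvdn_trans abt; apply: dvdn_mull.
have aN : a * a %| N -> a %| N by move=> h; apply: dvdn_trans h; apply: dvdn_mulr.
have bN : b * b %| N -> b %| N by move=> h; apply: dvdn_trans h; apply: dvdn_mulr.
have [ha|[p1 [pp1 p1N ap1]]] := case_a a N pa N0 at_;
have [hb|[p2 [pp2 p2N bp2]]] := case_a b N pb N0 bt.
- by left; apply: dvd_mul_pr => //; [apply: aN | apply: bN].
- case: (eqVneq p2 a) => [e|ne].
    right; left; split => //; move: bp2; rewrite e => /dvdn_leq.
    move=> /(_ (pm1_gt0 a pa)) h; apply: (leq_ltn_trans h).
    by rewrite ltn_predL prime_gt0.
  do 3 right; left; exists p2; split => //.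
  by apply: dvd_mul_pr => //; [rewrite eq_sym | apply: aN].
- case: (eqVneq p1 b) => [e|ne].
    do 2 right; left; split => //; move: ap1; rewrite e => /dvdn_leq.
    move=> /(_ (pm1_gt0 b pb)) h; apply: (leq_ltn_trans h).
    by rewrite ltn_predL prime_gt0.
  do 4 right; left; exists p1; split => //.
  by apply: dvd_mul_pr => //; [rewrite eq_sym | apply: bN].
- case: (eqVneq p1 p2) => [e|ne].
    do 5 right; left; exists p1; split => //.
    by apply: dvd_mul_pr => //; rewrite e.
  do 6 right; exists p1, p2; split => //; split => //.
  exact: dvd_mul_pr.
Qed.

Definition cntP (M i : nat) (D : pred nat) :=
  count (fun n => (0 < n) && D (phi_iter i n)) (iota 0 M.+1).

Lemma count_sub_in (T : eqType) (a b : pred T) (s : seq T) :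
  {in s, forall x, a x -> b x} -> count a s <= count b s.
Proof.
elim: s => [//|x s IH] H /=.
have Hs : {in s, forall x, a x -> b x} by move=> z zs; apply: H; rewrite inE zs orbT.
apply: leq_add; last exact: IH.
case ax: (a x) => //; by rewrite H // inE eqxx.
Qed.

Lemma cntP_mono M i (D1 D2 : pred nat) :
  (forall N, 0 < N -> N <= M -> D1 N -> D2 N) -> cntP M i D1 <= cntP M i D2.
Proof.
move=> H; apply: count_sub_in => n; rewrite mem_iota add0n ltnS => nM /andP [n0 d1].
rewrite n0 /=; apply: H => //; first exact: phi_iter_gt0.
exact: leq_trans (phi_iter_le _ _) nM.
Qed.

Lemma cntP_or M i (D1 D2 : pred nat) :
  cntP M i (fun N => D1 N || D2 N) <= cntP M i D1 + cntP M i D2.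
Proof.
rewrite /cntP; elim: (iota 0 M.+1) => [//|x s IH] /=.
case: (0 < x) => /=; last by rewrite !add0n.
case: (D1 _); case: (D2 _) => /=; lia.
Qed.

Lemma cntP_has M i (T : Type) (ps : seq T) (E : T -> pred nat) :
  cntP M i (fun N => has (fun p => E p N) ps) <= \sum_(p <- ps) cntP M i (E p).
Proof.
elim: ps => [|p ps IH].
  by rewrite big_nil /cntP; elim: (iota 0 M.+1) => [//|x s IHs] /=; rewrite andbF.
rewrite big_cons /=.
apply: leq_trans (cntP_or _ _ _ _) _.
exact: leq_add.
Qed.

Lemma cntP_cond M i (c : bool) (D : pred nat) :
  cntP M i (fun N => c && D N) = if c then cntP M i D else 0.
Proof.
case: c; first by [].
by rewrite /cntP; elim: (iota 0 M.+1) => [//|x s IHs] /=; rewrite andbF.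
Qed.

Lemma cntP_S M i D : cntP M i.+1 D = cntP M i (fun N => D (totient N)).
Proof. by rewrite /cntP; apply: eq_count => n; rewrite phi_iterS. Qed.

Lemma cntP_0 M d : 0 < d -> cntP M 0 (dvdn d) = M %/ d.
Proof.
move=> d0; rewrite /cntP; elim: M => [|M IH].
  by rewrite /= div0n.
have -> : iota 0 M.+2 = iota 0 M.+1 ++ [:: M.+1] by rewrite -[M.+2]addn1 iotaD.
rewrite count_cat IH /= divnS // addn0 addnC.
by rewrite /phi_iter /=.
Qed.

Lemma in_iota_dvd M p N : 0 < N -> N <= M -> p %| N -> p \in iota 0 M.+1.
Proof.
move=> N0 NM pN; rewrite mem_iota add0n ltnS.
exact: leq_trans (dvdn_leq N0 pN) NM.
Qed.
Arguments in_iota_dvd {M p N}.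

Lemma step_a M i r : prime r ->
  cntP M i.+1 (dvdn r) <= cntP M i (dvdn (r * r)) +
    \sum_(p <- iota 0 M.+1) (if prime p && (r %| p.-1) then cntP M i (dvdn p) else 0).
Proof.
move=> pr; rewrite cntP_S.
apply: leq_trans (@cntP_mono M i _ (fun N => (r * r %| N) ||
   has (fun p => (prime p && (r %| p.-1)) && (p %| N)) (iota 0 M.+1)) _) _.
  move=> N N0 NM rt; have [->//|[p [pp pN rp]]] := case_a r N pr N0 rt.
  apply/orP; right; apply/hasP; exists p; first exact: in_iota_dvd N0 NM pN.
  by rewrite pp rp pN.
apply: leq_trans (cntP_or _ _ _ _) _; apply: leq_add => //.
apply: leq_trans (cntP_has _ _ _ _ _) _.
by apply: leq_sum => p _; rewrite cntP_cond.
Qed.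

Lemma step_b M i r : prime r ->
  cntP M i.+1 (dvdn (r * r)) <= cntP M i (dvdn (r * r)) +
    \sum_(p <- iota 0 M.+1) (if prime p && (r * r %| p.-1) then cntP M i (dvdn p) else 0) +
    \sum_(p1 <- iota 0 M.+1) \sum_(p2 <- iota 0 M.+1)
       (if [&& prime p1, prime p2, p1 != p2, r %| p1.-1 & r %| p2.-1]
        then cntP M i (dvdn (p1 * p2)) else 0).
Proof.
move=> pr; rewrite cntP_S.
set I := iota 0 M.+1.
apply: leq_trans (@cntP_mono M i _ (fun N => (r * r %| N) ||
   (has (fun p => (prime p && (r * r %| p.-1)) && (p %| N)) I ||
    has (fun p1 => has (fun p2 => [&& prime p1, prime p2, p1 != p2, r %| p1.-1 & r %| p2.-1]
        && (p1 * p2 %| N)) I) I)) _) _.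
  move=> N N0 NM rt.
  have [->//|[[p [pp pN rp]]|[p1 [p2 [pp1 pp2 ne pN [r1 r2]]]]]] := case_b r N pr N0 rt.
    apply/orP; right; apply/orP; left; apply/hasP; exists p; first exact: in_iota_dvd N0 NM pN.
    by rewrite pp rp pN.
  apply/orP; right; apply/orP; right.
  have p1N : p1 %| N by apply: dvdn_trans pN; apply: dvdn_mulr.
  have p2N : p2 %| N by apply: dvdn_trans pN; apply: dvdn_mull.
  apply/hasP; exists p1; first exact: in_iota_dvd N0 NM p1N.
  apply/hasP; exists p2; first exact: in_iota_dvd N0 NM p2N.
  by rewrite pp1 pp2 ne r1 r2 pN.
rewrite -addnA.
apply: leq_trans (cntP_or _ _ _ _) _; apply: leq_add => //.
apply: leq_trans (cntP_or _ _ _ _) _; apply: leq_add.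
  apply: leq_trans (cntP_has _ _ _ _ _) _.
  by apply: leq_sum => p _; rewrite cntP_cond.
apply: leq_trans (cntP_has _ _ _ _ _) _.
apply: leq_sum => p1 _.
apply: leq_trans (cntP_has _ _ _ _ _) _.
by apply: leq_sum => p2 _; rewrite cntP_cond.
Qed.

Lemma cntP_has1 M i (ps : seq nat) (c : nat -> bool) (g : nat -> nat) :
  cntP M i (fun N => has (fun p => c p && (g p %| N)) ps) <=
  \sum_(p <- ps) (if c p then cntP M i (dvdn (g p)) else 0).
Proof.
apply: leq_trans (cntP_has _ _ _ _ _) _.
by apply: leq_sum => p _; rewrite cntP_cond.
Qed.

Lemma cntP_has2 M i (ps : seq nat) (c : nat -> nat -> bool) (g : nat -> nat -> nat) :
  cntP M i (fun N => has (fun p1 => has (fun p2 => c p1 p2 && (g p1 p2 %| N)) ps) ps) <=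
  \sum_(p1 <- ps) \sum_(p2 <- ps) (if c p1 p2 then cntP M i (dvdn (g p1 p2)) else 0).
Proof.
apply: leq_trans (cntP_has _ _ _ _ _) _.
apply: leq_sum => p1 _; exact: cntP_has1.
Qed.

Lemma step_c M i a b : prime a -> prime b -> a != b ->
  cntP M i.+1 (dvdn (a * b)) <= cntP M i (dvdn (a * b)) +
   ((if b < a then cntP M i (dvdn (a * a)) else 0) +
   ((if a < b then cntP M i (dvdn (b * b)) else 0) +
   (\sum_(p <- iota 0 M.+1) (if prime p && (p != a) && (b %| p.-1) then cntP M i (dvdn (a * p)) else 0) +
   (\sum_(p <- iota 0 M.+1) (if prime p && (p != b) && (a %| p.-1) then cntP M i (dvdn (b * p)) else 0) +
   (\sum_(p <- iota 0 M.+1) (if prime p && (a * b %| p.-1) then cntP M i (dvdn p) else 0) +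
    \sum_(p1 <- iota 0 M.+1) \sum_(p2 <- iota 0 M.+1)
       (if [&& prime p1, prime p2, p1 != p2, a %| p1.-1 & b %| p2.-1]
        then cntP M i (dvdn (p1 * p2)) else 0)))))).
Proof.
move=> pa pb nab; set I := iota 0 M.+1; rewrite cntP_S.
apply: leq_trans (@cntP_mono M i _ (fun N => [|| a * b %| N, (b < a) && (a * a %| N),
   (a < b) && (b * b %| N),
   has (fun p => (prime p && (p != a) && (b %| p.-1)) && (a * p %| N)) I,
   has (fun p => (prime p && (p != b) && (a %| p.-1)) && (b * p %| N)) I,
   has (fun p => (prime p && (a * b %| p.-1)) && (p %| N)) I |
   has (fun p1 => has (fun p2 => [&& prime p1, prime p2, p1 != p2, a %| p1.-1 & b %| p2.-1]
        && (p1 * p2 %| N)) I) I]) _) _.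
  move=> N N0 NM rt.
  have [h|[[h1 h2]|[[h1 h2]|[[p [pp pa' bp apN]]|[[p [pp pb' ap bpN]]|[[p [pp abp pN]]|[p1 [p2 [pp1 pp2 ne ap1 [bp2 pN]]]]]]]]]] := case_c a b N pa pb nab N0 rt.
  - by rewrite h.
  - by rewrite h1 h2 orbT.
  - by rewrite h1 h2 !orbT.
  - have pN : p %| N by apply: dvdn_trans apN; apply: dvdn_mull.
    do 3 (apply/orP; right); apply/orP; left; apply/hasP; exists p; first exact: in_iota_dvd N0 NM pN.
    by rewrite pp pa' bp apN.
  - have pN : p %| N by apply: dvdn_trans bpN; apply: dvdn_mull.
    do 4 (apply/orP; right); apply/orP; left; apply/hasP; exists p; first exact: in_iota_dvd N0 NM pN.
    by rewrite pp pb' ap bpN.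
  - do 5 (apply/orP; right); apply/orP; left; apply/hasP; exists p; first exact: in_iota_dvd N0 NM pN.
    by rewrite pp abp pN.
  - do 6 (apply/orP; right).
    have p1N : p1 %| N by apply: dvdn_trans pN; apply: dvdn_mulr.
    have p2N : p2 %| N by apply: dvdn_trans pN; apply: dvdn_mull.
    apply/hasP; exists p1; first exact: in_iota_dvd N0 NM p1N.
    apply/hasP; exists p2; first exact: in_iota_dvd N0 NM p2N.
    by rewrite pp1 pp2 ne ap1 bp2 pN.
apply: leq_trans (cntP_or _ _ _ _) _; apply: leq_add => //.
apply: leq_trans (cntP_or _ _ _ _) _; apply: leq_add; first by rewrite cntP_cond.
apply: leq_trans (cntP_or _ _ _ _) _; apply: leq_add; first by rewrite cntP_cond.
apply: leq_trans (cntP_or _ _ _ _) _; apply: leq_add; first exact: cntP_has1.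
apply: leq_trans (cntP_or _ _ _ _) _; apply: leq_add; first exact: cntP_has1.
apply: leq_trans (cntP_or _ _ _ _) _; apply: leq_add; first exact: cntP_has1.
exact: cntP_has2.
Qed.

Local Open Scope R_scope.

Definition RS (f : nat -> R) (s : seq nat) : R := foldr (fun p acc => f p + acc) 0 s.

Lemma INR_add (a b : nat) : INR (a + b)%N = INR a + INR b.
Proof. by rewrite -plusE plus_INR. Qed.

Lemma INR_mul (a b : nat) : INR (a * b)%N = INR a * INR b.
Proof. by rewrite -multE mult_INR. Qed.

Lemma INR_sum (F : nat -> nat) s : INR (\sum_(p <- s) F p)%N = RS (fun p => INR (F p)) s.
Proof.
elim: s => [|a s IH]; first by rewrite big_nil.
by rewrite big_cons INR_add IH.
Qed.

Lemma INR_leq (a b : nat) : (a <= b)%N -> INR a <= INR b.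
Proof. by move=> /leP; apply: le_INR. Qed.
Arguments INR_leq {a b}.

Lemma RS_le f g s : (forall p, f p <= g p) -> RS f s <= RS g s.
Proof. move=> H; elim: s => [|a s IH] /=; first lra. by have := H a; lra. Qed.

Lemma RS_scal k f s : RS (fun p => k * f p) s = k * RS f s.
Proof. elim: s => [|a s IH] /=; first ring. rewrite IH; ring. Qed.

Lemma RS_ge0 f s : (forall p, 0 <= f p) -> 0 <= RS f s.
Proof. move=> H; elim: s => [|a s IH] /=; first lra. by have := H a; lra. Qed.

Lemma RS_cat f s t : RS f (s ++ t) = RS f s + RS f t.
Proof. elim: s => [|a s IH] /=; first ring. rewrite IH; ring. Qed.

Lemma RS_mul f g s t :
  RS (fun a => RS (fun b => f a * g b) t) s = RS f s * RS g t.
Proof.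
elim: s => [|a s IH] /=; first ring.
by rewrite IH RS_scal; ring.
Qed.

Lemma prime_INR p : prime p -> 2 <= INR p.
Proof. move=> pp; have := INR_leq (prime_gt1 pp); simpl; lra. Qed.

Lemma RS1 f a : RS f [:: a] = f a.
Proof. rewrite /RS /=; ring. Qed.

Definition H (T : nat) := RS (fun t => / INR t) (iota 1 T).

Lemma iotaS0 n : iota 0 n.+1 = iota 0 n ++ [:: n].
Proof. by rewrite -[n.+1]addn1 iotaD. Qed.

Lemma iotaS1 n : iota 1 n.+1 = iota 1 n ++ [:: n.+1].
Proof. have -> : iota 1 n.+1 = iota 1 (n + 1) by rewrite addn1. by rewrite iotaD add1n. Qed.

Lemma ln_step (T : nat) : (1 <= T)%N -> ln (INR T) + / INR T.+1 <= ln (INR T.+1).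
Proof.
move=> T1.
have t0 : 0 < INR T by have := INR_leq T1; simpl; lra.
have t1 : 0 < INR T.+1 by rewrite S_INR; lra.
have := exp_ineq1_le (ln (INR T / INR T.+1)).
rewrite exp_ln; last by apply: Rdiv_lt_0_compat.
rewrite /Rdiv ln_mult // ?ln_Rinv //; last by apply: Rinv_0_lt_compat.
have -> : INR T * / INR T.+1 = 1 - / INR T.+1 by rewrite S_INR; field; lra.
lra.
Qed.

Lemma H_le T : (1 <= T)%N -> H T <= 1 + ln (INR T).
Proof.
elim: T => [//|T IH] _.
case: (posnP T) => [->|T0].
  by rewrite /H /= ln_1; lra.
rewrite /H iotaS1 RS_cat -/(H T) RS1.
have := IH T0; have := ln_step T T0; lra.
Qed.

Definition psum (m M : nat) :=
  RS (fun p => if prime p && (m %| p.-1) then / INR p else 0) (iota 0 M.+1).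

Lemma INR_pos n : (0 < n)%N -> 0 < INR n.
Proof. move=> h; have := INR_leq h; simpl; lra. Qed.

Lemma psum_G m U : (0 < m)%N -> psum m U.+1 <= H (U %/ m) * / INR m.
Proof.
move=> m0; have mpos := INR_pos m m0.
elim: U => [|U IH].
  rewrite div0n /H /= /psum.
  have -> : iota 0 2 = [:: 0%N; 1%N] by [].
  rewrite /RS /=; lra.
rewrite /psum iotaS0 RS_cat RS1 -/(psum m U.+1) divnS //.
case dm: (m %| U.+1).
- rewrite add1n /H iotaS1 RS_cat RS1 -/(H (U %/ m)) Rmult_plus_distr_r.
  have hU : ((U %/ m).+1 * m)%N = U.+1.
    have e : (U.+1 %/ m)%N = (U %/ m).+1 by rewrite divnS // dm.
    by rewrite -e divnK.
  have t : (if prime U.+2 && true then / INR U.+2 else 0) <= / INR (U %/ m).+1 * / INR m.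
    rewrite -Rinv_mult -INR_mul hU.
    have u1 := INR_pos U.+1 (ltn0Sn _).
    have u2 : INR U.+1 < INR U.+2 by rewrite (S_INR U.+1); lra.
    case: ifP => _; last by have := Rinv_0_lt_compat _ u1; lra.
    by apply: Rlt_le; apply: Rinv_lt_contravar => //; nra.
  lra.
- rewrite andbF add0n; lra.
Qed.

Lemma ln_le_nat a b : (1 <= a)%N -> (a <= b)%N -> ln (INR a) <= ln (INR b).
Proof.
move=> a1 ab; case: (ltngtP a b) => [lt||->]; last by lra.
- apply: Rlt_le; apply: ln_increasing; first exact: INR_pos.
  by apply: lt_INR; apply/ltP.
- by move=> h; move: ab; rewrite leqNgt h.
Qed.

Lemma ln_nat_ge0 a : (1 <= a)%N -> 0 <= ln (INR a).
Proof. move=> a1; have := ln_le_nat 1 a (leqnn 1) a1; rewrite /= ln_1; lra. Qed.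

Lemma psum_le m M : (0 < m)%N -> (1 <= M)%N -> psum m M <= (1 + ln (INR M)) * / INR m.
Proof.
move=> m0 M1; have mi := Rinv_0_lt_compat _ (INR_pos m m0).
case: M M1 => [//|U] _.
apply: Rle_trans (psum_G m U m0) _.
apply: Rmult_le_compat_r; first lra.
have l0 := ln_nat_ge0 U.+1 (ltn0Sn _).
case: (posnP (U %/ m)) => [->|T0]; first by have -> : H 0 = 0 by []; lra.
apply: Rle_trans (H_le _ T0) _.
have := ln_le_nat _ U.+1 T0 (leq_trans (leq_div U m) (leqnSn U)); lra.
Qed.

Lemma inv_ineq1 u : 1 <= u -> / ((u + 1) * (u + 1)) <= / u - / (u + 1).
Proof.
move=> u1.
have -> : / u - / (u + 1) = / (u * (u + 1)) by field; lra.
apply: Rinv_le_contravar; nra.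
Qed.

Lemma inv_ineq2 u : 2 <= u -> / ((u + 1) * (u + 1)) + / (u + 1) <= / (u - 1).
Proof.
move=> u2.
have d : / (u - 1) - (/ ((u + 1) * (u + 1)) + / (u + 1)) = (u + 3) / ((u - 1) * (u + 1) * (u + 1)) by field; lra.
have : 0 <= (u + 3) / ((u - 1) * (u + 1) * (u + 1)).
  apply: Rlt_le; apply: Rdiv_lt_0_compat; first lra.
  apply: Rmult_lt_0_compat; last lra. apply: Rmult_lt_0_compat; lra.
lra.
Qed.

Lemma inv_ineq3 y : 2 <= y -> / (y - 1) <= 2 / y.
Proof.
move=> y2.
have d : 2 / y - / (y - 1) = (y - 2) / (y * (y - 1)) by field; lra.
have : 0 <= (y - 2) / (y * (y - 1)).
  apply: Rmult_le_pos; first lra.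
  apply: Rlt_le; apply: Rinv_0_lt_compat; nra.
lra.
Qed.

Definition qsum (y : R) (U : nat) :=
  RS (fun q => if prime q && ~~ leRb q y then / (INR q * INR q) else 0) (iota 0 U.+1).

Lemma leRbP n r : reflect (INR n <= r) (leRb n r).
Proof. rewrite /leRb; case: Rle_dec => h; constructor => //. Qed.

Lemma qsum_inv y U : 2 <= y ->
  qsum y U <= (if leRb U y then 0 else / (y - 1) - / INR U).
Proof.
move=> y2; elim: U => [|U IH].
  rewrite /qsum /= /RS /=.
  case: leRbP => h; first lra.
  by exfalso; apply: h; simpl; lra.
rewrite /qsum iotaS0 RS_cat RS1 -/(qsum y U).
have u1 := S_INR U.
case: (leRbP U y) IH => hU IH.
- case: (leRbP U.+1 y) => h1.
    by rewrite andbF; lra.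
  rewrite andbT.
  have Uge1 : 1 <= INR U by lra.
  have i2 := inv_ineq1 (INR U) Uge1.
  have i3 : / (INR U) <= / (y - 1) by apply: Rinv_le_contravar; lra.
  have p : 0 < / ((INR U + 1) * (INR U + 1)) by apply: Rinv_0_lt_compat; nra.
  rewrite u1; case: (prime U.+1); lra.
- have Uge1 : 1 <= INR U by lra.
  case: (leRbP U.+1 y) => h1; first lra.
  rewrite andbT.
  have i1 := inv_ineq1 (INR U) Uge1.
  have p : 0 < / ((INR U + 1) * (INR U + 1)) by apply: Rinv_0_lt_compat; nra.
  rewrite u1; case: (prime U.+1); lra.
Qed.


Lemma qsum_le y U : 2 <= y -> qsum y U <= 2 / y.
Proof.
move=> y2; have := qsum_inv y U y2; have := inv_ineq3 y y2.
have y0 : 0 < 2 / y by apply: Rdiv_lt_0_compat; lra.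
case: leRbP => h; first lra.
have : 0 < / INR U by apply: Rinv_0_lt_compat; lra.
lra.
Qed.

Lemma RS_if_le (c c' : nat -> bool) (cnt : nat -> nat) (k : R) (g : nat -> R) s :
  0 <= k -> (forall p, 0 <= g p) ->
  (forall p, c p -> c' p /\ INR (cnt p) <= k * g p) ->
  RS (fun p => INR (if c p then cnt p else 0%N)) s <= k * RS (fun p => if c' p then g p else 0) s.
Proof.
move=> k0 g0 H; rewrite -RS_scal; apply: RS_le => p.
case cp: (c p).
  by have [-> h] := H p cp.
simpl; case: (c' p); last lra.
by have := g0 p; nra.
Qed.

Lemma RS2_le (C : nat -> nat -> bool) (c1 c2 : nat -> bool) (cnt : nat -> nat -> nat)
   (k : R) (g1 g2 : nat -> R) s :
  0 <= k -> (forall p, 0 <= g1 p) -> (forall p, 0 <= g2 p) ->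
  (forall p1 p2, C p1 p2 -> [/\ c1 p1, c2 p2 & INR (cnt p1 p2) <= k * (g1 p1 * g2 p2)]) ->
  INR (\sum_(p1 <- s) \sum_(p2 <- s) (if C p1 p2 then cnt p1 p2 else 0%N))
   <= k * (RS (fun p => if c1 p then g1 p else 0) s * RS (fun p => if c2 p then g2 p else 0) s).
Proof.
move=> k0 g10 g20 H.
rewrite INR_sum -RS_mul -RS_scal; apply: RS_le => p1.
rewrite INR_sum -RS_scal; apply: RS_le => p2.
case Cp: (C p1 p2).
  have [-> -> h] := H p1 p2 Cp; lra.
simpl.
have h1 : 0 <= (if c1 p1 then g1 p1 else 0) by case: (c1 p1); [apply: g10 | lra].
have h2 : 0 <= (if c2 p2 then g2 p2 else 0) by case: (c2 p2); [apply: g20 | lra].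
by apply: Rmult_le_pos => //; apply: Rmult_le_pos.
Qed.

Lemma comb1 B S v X : 0 <= B -> 1 <= S -> 0 <= v <= 1 ->
  X <= B * (v * v) + B * (S * v) -> X <= B * (7 * S ^ 2) * v.
Proof.
move=> B0 S1 [v0 v1] h.
have Bv : 0 <= B * v by apply: Rmult_le_pos.
have d1 : 0 <= S * S - v by nra.
have d2 : 0 <= S * S - S by nra.
have p1 := Rmult_le_pos _ _ Bv d1.
have p2 := Rmult_le_pos _ _ Bv d2.
have p3 : 0 <= B * v * (S * S) by apply: Rmult_le_pos; nra.
simpl.
have -> : B * (7 * (S * (S * 1))) * v = 7 * (B * v * (S * S)) by ring.
have E : B * (v * v) + B * (S * v) = 2 * (B * v * (S * S)) - B * v * (S * S - v) - B * v * (S * S - S) by ring.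
lra.
Qed.

Lemma comb2 B S w X : 0 <= B -> 1 <= S -> 0 <= w ->
  X <= B * w + B * (S * w) + B * (S * S * w) -> X <= B * (7 * S ^ 2) * w.
Proof.
move=> B0 S1 w0 h.
have Bw : 0 <= B * w by apply: Rmult_le_pos.
have d1 : 0 <= S * S - 1 by nra.
have d2 : 0 <= S * S - S by nra.
have p1 := Rmult_le_pos _ _ Bw d1.
have p2 := Rmult_le_pos _ _ Bw d2.
have p3 : 0 <= B * w * (S * S) by apply: Rmult_le_pos; nra.
simpl.
have -> : B * (7 * (S * (S * 1))) * w = 7 * (B * w * (S * S)) by ring.
have E : B * w + B * (S * w) + B * (S * S * w) = 3 * (B * w * (S * S)) - B * w * (S * S - 1) - B * w * (S * S - S) by ring.
lra.
Qed.

Lemma comb3 B S w X : 0 <= B -> 1 <= S -> 0 <= w ->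
  X <= B * w + (B * w + (B * w + (B * (S * w) + (B * (S * w) + (B * (S * w) + B * (S * S * w)))))) ->
  X <= B * (7 * S ^ 2) * w.
Proof.
move=> B0 S1 w0 h.
have Bw : 0 <= B * w by apply: Rmult_le_pos.
have d1 : 0 <= S * S - 1 by nra.
have d2 : 0 <= S * S - S by nra.
have p1 := Rmult_le_pos _ _ Bw d1.
have p2 := Rmult_le_pos _ _ Bw d2.
have p3 : 0 <= B * w * (S * S) by apply: Rmult_le_pos; nra.
simpl.
have -> : B * (7 * (S * (S * 1))) * w = 7 * (B * w * (S * S)) by ring.
have E : B * w + (B * w + (B * w + (B * (S * w) + (B * (S * w) + (B * (S * w) + B * (S * S * w))))))
  = 7 * (B * w * (S * S)) - 3 * (B * w * (S * S - 1)) - 3 * (B * w * (S * S - S)) by ring.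
lra.
Qed.

Lemma INR_le3 a b c d : (a <= b + c + d)%N -> INR a <= INR b + INR c + INR d.
Proof. by move=> /INR_leq; rewrite !INR_add. Qed.

Lemma INR_le7 a b c d e f g h : (a <= b + (c + (d + (e + (f + (g + h))))))%N ->
  INR a <= INR b + (INR c + (INR d + (INR e + (INR f + (INR g + INR h))))).
Proof. by move=> /INR_leq; rewrite !INR_add. Qed.

Definition SS M := 1 + ln (INR M).
Definition BB M i := INR M * (7 * SS M ^ 2) ^ i.

Lemma inv_INR_ge0 p : 0 <= / INR p.
Proof.
case: p => [|p]; first by rewrite /= Rinv_0; lra.
by apply: Rlt_le; apply: Rinv_0_lt_compat; apply: INR_pos.
Qed.

Lemma inv_pr p : prime p -> 0 < / INR p <= 1.
Proof.
move=> pp; have := prime_INR p pp => h; split.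
  apply: Rinv_0_lt_compat; lra.
rewrite -Rinv_1; apply: Rinv_le_contravar; lra.
Qed.

Lemma base_bound M d : (0 < d)%N -> INR (M %/ d) <= INR M * / INR d.
Proof.
move=> d0; have h := INR_leq (leq_trunc_div M d).
rewrite INR_mul in h.
have dp := INR_pos d d0.
have -> : INR (M %/ d) = INR (M %/ d) * INR d * / INR d by field; lra.
apply: Rmult_le_compat_r => //; exact: inv_INR_ge0.
Qed.

Lemma psum_ge0 m M : 0 <= psum m M.
Proof.
apply: RS_ge0 => p; case: (_ && _); [exact: inv_INR_ge0 | lra].
Qed.

Lemma bounds M i : (1 <= M)%N ->
  (forall r, prime r -> INR (cntP M i (dvdn r)) <= BB M i * / INR r) /\
  (forall r, prime r -> INR (cntP M i (dvdn (r * r))) <= BB M i * (/ INR r * / INR r)) /\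
  (forall a b, prime a -> prime b -> a != b ->
     INR (cntP M i (dvdn (a * b))) <= BB M i * (/ INR a * / INR b)).
Proof.
move=> M1.
have S1 : 1 <= SS M by have := ln_nat_ge0 M M1; rewrite /SS; lra.
have M0 : 0 <= INR M by apply: pos_INR.
elim: i => [|i [IH1 [IH2 IH3]]].
  rewrite /BB pow_O Rmult_1_r.
  split; [|split].
  - move=> r pr; rewrite cntP_0 ?prime_gt0 //; exact: base_bound (prime_gt0 pr).
  - move=> r pr; rewrite cntP_0 ?muln_gt0 ?prime_gt0 //.
    rewrite -Rinv_mult -INR_mul; apply: base_bound; by rewrite muln_gt0 prime_gt0.
  - move=> a b pa pb _; rewrite cntP_0 ?muln_gt0 ?prime_gt0 //.
    rewrite -Rinv_mult -INR_mul; apply: base_bound; by rewrite muln_gt0 (prime_gt0 pa) (prime_gt0 pb).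
set B := BB M i in IH1 IH2 IH3 *.
have B0 : 0 <= B by apply: Rmult_le_pos => //; apply: pow_le; have := S1; nra.
have BS : BB M i.+1 = B * (7 * SS M ^ 2) by rewrite /B /BB /=; ring.
rewrite BS.
split; [|split].
- move=> r pr.
  have h := INR_leq (step_a M i r pr).
  rewrite INR_add INR_sum in h.
  have h2 : RS (fun p => INR (if prime p && (r %| p.-1) then cntP M i (dvdn p) else 0%N)) (iota 0 M.+1)
            <= B * psum r M.
    apply: (@RS_if_le _ (fun p => prime p && (r %| p.-1)) _ B (fun p => / INR p)) => //.
      exact: inv_INR_ge0.
    move=> p /andP [pp rp]; split; first by rewrite pp rp.
    exact: IH1.
  have h3 := psum_le r M (prime_gt0 pr) M1.
  have h4 := IH2 r pr.
  have [v0 v1] := inv_pr r pr.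
  apply: (comb1 B (SS M) (/ INR r)) => //; first lra.
  have : B * psum r M <= B * (SS M * / INR r) by apply: Rmult_le_compat_l.
  lra.
- move=> r pr.
  have h := INR_le3 _ _ _ _ (step_b M i r pr).
  have h2 : INR (\sum_(p <- iota 0 M.+1) (if prime p && (r * r %| p.-1) then cntP M i (dvdn p) else 0%N))
            <= B * psum (r * r) M.
    rewrite INR_sum.
    apply: (@RS_if_le _ (fun p => prime p && (r * r %| p.-1)) _ B (fun p => / INR p)) => //.
      exact: inv_INR_ge0.
    move=> p /andP [pp rp]; split; first by rewrite pp rp.
    exact: IH1.
  have h3 : INR (\sum_(p1 <- iota 0 M.+1) \sum_(p2 <- iota 0 M.+1)
       (if [&& prime p1, prime p2, p1 != p2, r %| p1.-1 & r %| p2.-1]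
        then cntP M i (dvdn (p1 * p2)) else 0%N)) <= B * (psum r M * psum r M).
    apply: (@RS2_le _ (fun p => prime p && (r %| p.-1)) (fun p => prime p && (r %| p.-1)) _ B
              (fun p => / INR p) (fun p => / INR p)) => //; try exact: inv_INR_ge0.
    move=> p1 p2 /and5P [pp1 pp2 ne r1 r2]; split; rewrite ?pp1 ?pp2 ?r1 ?r2 //.
    exact: IH3.
  have r0 : (0 < r * r)%N by rewrite muln_gt0 (prime_gt0 pr).
  have h4 := psum_le (r * r) M r0 M1.
  rewrite INR_mul Rinv_mult in h4.
  have h5 := psum_le r M (prime_gt0 pr) M1.
  have h6 := IH2 r pr.
  have [v0 v1] := inv_pr r pr.
  have p0 := psum_ge0 r M.
  have e1 : B * psum (r * r) M <= B * (SS M * (/ INR r * / INR r)) by apply: Rmult_le_compat_l.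
  have e2 : psum r M * psum r M <= (SS M * / INR r) * (SS M * / INR r)
    by apply: Rmult_le_compat => //.
  have e3 : B * (psum r M * psum r M) <= B * (SS M * SS M * (/ INR r * / INR r)).
    have -> : SS M * SS M * (/ INR r * / INR r) = (SS M * / INR r) * (SS M * / INR r) by ring.
    by apply: Rmult_le_compat_l.
  apply: (comb2 B (SS M) (/ INR r * / INR r)) => //; first by nra.
  lra.
- move=> a b pa pb nab.
  have h := INR_le7 _ _ _ _ _ _ _ _ (step_c M i a b pa pb nab).
  have [va0 va1] := inv_pr a pa.
  have [vb0 vb1] := inv_pr b pb.
  have t1 := IH3 a b pa pb nab.
  have t2 : INR (if (b < a)%N then cntP M i (dvdn (a * a)) else 0%N) <= B * ((/ INR a) * (/ INR b)).
    case: ltnP => ba; last by simpl; apply: Rmult_le_pos => //; nra.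
    have : (/ INR a) <= (/ INR b).
      apply: Rinv_le_contravar; first by have := prime_INR b pb; lra.
      by apply: INR_leq; apply: ltnW.
    have := IH2 a pa; move=> h' hv.
    apply: Rle_trans h' _; apply: Rmult_le_compat_l => //; nra.
  have t3 : INR (if (a < b)%N then cntP M i (dvdn (b * b)) else 0%N) <= B * ((/ INR a) * (/ INR b)).
    case: ltnP => ab; last by simpl; apply: Rmult_le_pos => //; nra.
    have : (/ INR b) <= (/ INR a).
      apply: Rinv_le_contravar; first by have := prime_INR a pa; lra.
      by apply: INR_leq; apply: ltnW.
    have := IH2 b pb; move=> h' hv.
    apply: Rle_trans h' _; apply: Rmult_le_compat_l => //; nra.
  have t4 : INR (\sum_(p <- iota 0 M.+1) (if prime p && (p != a) && (b %| p.-1) then cntP M i (dvdn (a * p)) else 0%N))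
            <= (B * (/ INR a)) * psum b M.
    rewrite INR_sum.
    apply: (@RS_if_le _ (fun p => prime p && (b %| p.-1)) _ (B * (/ INR a)) (fun p => / INR p)) => //.
    - by apply: Rmult_le_pos; lra.
    - exact: inv_INR_ge0.
    move=> p /andP [/andP [pp pa'] bp]; split; first by rewrite pp bp.
    have := IH3 a p pa pp (ltac:(by rewrite eq_sym)); rewrite -Rmult_assoc; done.
  have t5 : INR (\sum_(p <- iota 0 M.+1) (if prime p && (p != b) && (a %| p.-1) then cntP M i (dvdn (b * p)) else 0%N))
            <= (B * (/ INR b)) * psum a M.
    rewrite INR_sum.
    apply: (@RS_if_le _ (fun p => prime p && (a %| p.-1)) _ (B * (/ INR b)) (fun p => / INR p)) => //.
    - by apply: Rmult_le_pos; lra.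
    - exact: inv_INR_ge0.
    move=> p /andP [/andP [pp pb'] ap]; split; first by rewrite pp ap.
    have := IH3 b p pb pp (ltac:(by rewrite eq_sym)); rewrite -Rmult_assoc; done.
  have t6 : INR (\sum_(p <- iota 0 M.+1) (if prime p && (a * b %| p.-1) then cntP M i (dvdn p) else 0%N))
            <= B * psum (a * b) M.
    rewrite INR_sum.
    apply: (@RS_if_le _ (fun p => prime p && (a * b %| p.-1)) _ B (fun p => / INR p)) => //.
      exact: inv_INR_ge0.
    move=> p /andP [pp rp]; split; first by rewrite pp rp.
    exact: IH1.
  have t7 : INR (\sum_(p1 <- iota 0 M.+1) \sum_(p2 <- iota 0 M.+1)
       (if [&& prime p1, prime p2, p1 != p2, a %| p1.-1 & b %| p2.-1]
        then cntP M i (dvdn (p1 * p2)) else 0%N)) <= B * (psum a M * psum b M).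
    apply: (@RS2_le _ (fun p => prime p && (a %| p.-1)) (fun p => prime p && (b %| p.-1)) _ B
              (fun p => / INR p) (fun p => / INR p)) => //; try exact: inv_INR_ge0.
    move=> p1 p2 /and5P [pp1 pp2 ne r1 r2]; split; rewrite ?pp1 ?pp2 ?r1 ?r2 //.
    exact: IH3.
  have ab0 : (0 < a * b)%N by rewrite muln_gt0 (prime_gt0 pa) (prime_gt0 pb).
  have s6 := psum_le (a * b) M ab0 M1.
  rewrite INR_mul Rinv_mult in s6.
  have sa := psum_le a M (prime_gt0 pa) M1.
  have sb := psum_le b M (prime_gt0 pb) M1.
  have pa0 := psum_ge0 a M.
  have pb0 := psum_ge0 b M.
  have Ba : 0 <= B * (/ INR a) by apply: Rmult_le_pos; lra.
  have Bb : 0 <= B * (/ INR b) by apply: Rmult_le_pos; lra.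
  have e4 : B * (/ INR a) * psum b M <= B * (/ INR a) * (SS M * (/ INR b)) by apply: Rmult_le_compat_l.
  have e5 : B * (/ INR b) * psum a M <= B * (/ INR b) * (SS M * (/ INR a)) by apply: Rmult_le_compat_l.
  have e6 : B * psum (a * b) M <= B * (SS M * ((/ INR a) * (/ INR b))) by apply: Rmult_le_compat_l.
  have e7 : psum a M * psum b M <= (SS M * (/ INR a)) * (SS M * (/ INR b)) by apply: Rmult_le_compat.
  have e8 : B * (psum a M * psum b M) <= B * ((SS M * (/ INR a)) * (SS M * (/ INR b))) by apply: Rmult_le_compat_l.
  apply: (comb3 B (SS M) ((/ INR a) * (/ INR b))) => //; first by nra.
  have E1 : B * (/ INR a) * (SS M * (/ INR b)) = B * (SS M * ((/ INR a) * (/ INR b))) by ring.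
  have E2 : B * (/ INR b) * (SS M * (/ INR a)) = B * (SS M * ((/ INR a) * (/ INR b))) by ring.
  have E3 : B * ((SS M * (/ INR a)) * (SS M * (/ INR b))) = B * (SS M * SS M * ((/ INR a) * (/ INR b))) by ring.
  lra.
Qed.

Lemma leRb_trans_nat (a b : nat) r : (a <= b)%N -> leRb b r -> leRb a r.
Proof.
move=> ab /leRbP h; apply/leRbP; apply: Rle_trans h; exact: INR_leq.
Qed.

Lemma Pset_mono x y i p : y <= x -> Pset x y 0 p -> Pset x y i p.
Proof.
move=> yx; elim: i p => [//|i IH] p /= /andP [pp /leRbP py].
rewrite pp /=; apply/andP; split; first by apply/leRbP; lra.
apply/allP => q; rewrite mem_primes => /and3P [pq p10 qp].
apply: IH; rewrite /= pq /=; apply/leRbP.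
apply: Rle_trans py; apply: INR_leq.
apply: leq_trans (dvdn_leq p10 qp) _; exact: leq_pred.
Qed.

Lemma dirB x y k n : (0 < n)%N -> INR n <= x ->
  all (fun p => leRb p y) (primes (phi_iter k n)) -> all (Pset x y k) (primes n).
Proof.
move=> n0 nx H.
suff S : forall i, (i <= k)%N -> all (Pset x y i) (primes (phi_iter (k - i) n)).
  by have := S k (leqnn k); rewrite subnn.
elim=> [_|i IH ik].
  rewrite subn0; apply/allP => p pin; have := allP H p pin.
  by move: pin; rewrite mem_primes /= => /andP [-> _] ->.
have e : (k - i = (k - i.+1).+1)%N by lia.
apply/allP => p; rewrite mem_primes => /and3P [pp m0 pm].
rewrite /= pp /=; apply/andP; split.
  apply/leRbP; apply: Rle_trans nx; apply: INR_leq.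
  apply: leq_trans (dvdn_leq m0 pm) _; exact: phi_iter_le.
apply/allP => q; rewrite mem_primes => /and3P [pq _ qp].
have := IH (ltnW ik); move=> /allP; apply.
rewrite e phi_iterS mem_primes pq totient_gt0 m0 /=.
apply: dvdn_trans qp _; exact: dvd_pm1_totient.
Qed.

Definition bad (y : R) (M k n : nat) :=
  has (fun j => has (fun q => (prime q && ~~ leRb q y) && (q * q %| phi_iter j n)) (iota 0 M.+1)) (iota 0 k).

Lemma dirA x y k M n : y <= x -> (0 < n)%N -> (n <= M)%N ->
  all (Pset x y k) (primes n) -> ~~ bad y M k n ->
  all (fun p => leRb p y) (primes (phi_iter k n)).
Proof.
move=> yx n0 nM H nb.
suff S : forall j, (j <= k)%N -> all (Pset x y (k - j)) (primes (phi_iter j n)).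
  apply/allP => p pin; have := allP (S k (leqnn k)) p pin.
  by rewrite subnn /= => /andP [].
elim=> [_|j IH jk]; first by rewrite subn0.
have e : (k - j = (k - j.+1).+1)%N by lia.
have m0 := phi_iter_gt0 j n n0.
apply/allP => q; rewrite phi_iterS mem_primes => /and3P [pq _ qt].
have [qq|[p [pp pm qp]]] := case_a q (phi_iter j n) pq m0 qt.
  apply: Pset_mono => //; rewrite /= pq /=.
  apply/negPn/negP => nq; move/negP: nb; apply.
  apply/hasP; exists j; first by rewrite mem_iota.
  apply/hasP; exists q.
    rewrite mem_iota add0n ltnS.
    have qm : q %| phi_iter j n by apply: dvdn_trans qq; apply: dvdn_mulr.
    apply: leq_trans (dvdn_leq m0 qm) _; exact: leq_trans (phi_iter_le _ _) nM.
  by rewrite pq nq qq.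
have := allP (IH (ltnW jk)) p; rewrite mem_primes pp m0 pm => /(_ isT).
rewrite e /= => /and3P [_ _ /allP]; apply.
by rewrite mem_primes pq qp pm1_gt0.
Qed.

Lemma count_has_and (a : pred nat) (js : seq nat) (E : nat -> pred nat) (s : seq nat) :
  (count (fun n => a n && has (fun j => E j n) js) s <= \sum_(j <- js) count (fun n => a n && E j n) s)%N.
Proof.
elim: js => [|j js IH].
  by rewrite big_nil; elim: s => [//|x s IHs] /=; rewrite andbF.
rewrite big_cons.
apply: (@leq_trans (count (fun n => a n && E j n) s + count (fun n => a n && has (fun j => E j n) js) s)).
  elim: s {IH} => [//|x s IHs] /=; simpl in IHs.
  case: (a x) => /=; last by lia.
  case: (E j x); case: (has (E^~ x) js) => /=; lia.
by rewrite leq_add2l.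
Qed.

Lemma bad_count_nat y M k :
  (count (fun n => (0 < n) && bad y M k n) (iota 0 M.+1) <=
   \sum_(j <- iota 0 k) \sum_(q <- iota 0 M.+1)
      (if prime q && ~~ leRb q y then cntP M j (dvdn (q * q)) else 0))%N.
Proof.
apply: leq_trans (count_has_and _ _ _ _) _.
apply: leq_sum => j _.
exact: (@cntP_has1 M j (iota 0 M.+1) (fun q => prime q && ~~ leRb q y) (fun q => q * q)%N).
Qed.

Lemma RS_le_in f g s : (forall p, p \in s -> f p <= g p) -> RS f s <= RS g s.
Proof.
elim: s => [|a s IH] H /=; first lra.
have h1 := H a (mem_head a s).
have h2 : RS f s <= RS g s by apply: IH => p ps; apply: H; rewrite inE ps orbT.
lra.
Qed.

Lemma RS_const c s : RS (fun _ => c) s = INR (size s) * c.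
Proof.
elim: s => [|a s IH]; first by rewrite /=; ring.
change (c + RS (fun _ => c) s = INR (size s).+1 * c).
rewrite IH S_INR; ring.
Qed.

Lemma bad_count_R y M k : 2 <= y -> (1 <= M)%N ->
  INR (count (fun n => (0 < n)%N && bad y M k n) (iota 0 M.+1)) <= INR k * (BB M k * (2 / y)).
Proof.
move=> y2 M1.
have S1 : 1 <= SS M by have := ln_nat_ge0 M M1; rewrite /SS; lra.
apply: Rle_trans (INR_leq (bad_count_nat y M k)) _.
rewrite INR_sum.
have -> : INR k * (BB M k * (2 / y)) = RS (fun _ => BB M k * (2 / y)) (iota 0 k)
  by rewrite RS_const size_iota.
apply: RS_le_in => j; rewrite mem_iota add0n => jk.
have [_ [IH2 _]] := bounds M j M1.
have Bj : 0 <= BB M j.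
  apply: Rmult_le_pos; first exact: pos_INR. apply: pow_le; nra.
have Bjk : BB M j <= BB M k.
  apply: Rmult_le_compat_l; first exact: pos_INR.
  apply: Rle_pow; first nra. by apply/leP; apply: ltnW.
apply: Rle_trans (_ : BB M j * qsum y M <= _).
  rewrite INR_sum /qsum.
  apply: (@RS_if_le _ (fun q => prime q && ~~ leRb q y) _ (BB M j) (fun q => / (INR q * INR q))) => //.
    move=> q; rewrite Rinv_mult; apply: Rmult_le_pos; exact: inv_INR_ge0.
  move=> q /andP [pq nq]; split; first by rewrite pq nq.
  rewrite Rinv_mult; exact: IH2.
have q0 : 0 <= qsum y M.
  apply: RS_ge0 => q; case: ifP => [/andP [pq _]|]; last lra.
  have := prime_INR q pq => h; apply: Rlt_le; apply: Rinv_0_lt_compat; nra.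
have := qsum_le y M y2.
have : 0 <= 2 / y by apply: Rlt_le; apply: Rdiv_lt_0_compat; lra.
move=> h1 h2.
apply: Rmult_le_compat => //.
Qed.

Lemma ln_le_R a b : 0 < a -> a <= b -> ln a <= ln b.
Proof.
move=> a0 ab; case: (Rle_lt_or_eq_dec _ _ ab) => [lt|->]; last lra.
by apply: Rlt_le; apply: ln_increasing.
Qed.

Lemma count_or (a b : pred nat) s : (count (fun n => a n || b n) s <= count a s + count b s)%N.
Proof. elim: s => [//|x s IH] /=; case: (a x); case: (b x) => /=; lia. Qed.

Lemma up_facts x : 2 <= x ->
  (3 <= Z.to_nat (up x))%N /\ (forall n : nat, (n < Z.to_nat (up x))%N -> INR n <= x).
Proof.
move=> x2; have [h1 h2] := archimed x.
have u3 : (3 <= up x)%Z.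
  have : (2 < up x)%Z by apply: lt_IZR; lra.
  lia.
split; first by apply/leP; lia.
move=> n /leP nN.
have : (Z.of_nat n <= up x - 1)%Z by lia.
move=> /IZR_le; rewrite minus_IZR -INR_IZR_INZ /=; lra.
Qed.

Theorem proposition1 (k : nat) :
  exists C : R, forall x y : R, 2 <= y -> y <= x ->
    Rabs (INR (Phi k x y) - INR (Psi x (Pset x y k)))
      <= C * (x * ln x ^ (2 * k)%nat / y).
Proof.
exists (2 * INR k * 63 ^ k) => x y y2 yx.
have x2 : 2 <= x by lra.
have [N3 Nx] := up_facts x x2.
set N0 := Z.to_nat (up x) in N3 Nx.
set M := N0.-1.
have eN : N0 = M.+1 by rewrite /M; lia.
have M1 : (1 <= M)%N by lia.
have Mx : INR M <= x by apply: Nx; rewrite eN.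
set gPhi := fun n => (0 < n)%N && all (fun p => leRb p y) (primes (phi_iter k n)).
set gPsi := fun n => (0 < n)%N && all (Pset x y k) (primes n).
have ePhi : Phi k x y = count gPhi (iota 0 M.+1).
  rewrite /Phi -/N0 eN; apply: eq_in_count => n; rewrite mem_iota add0n => nN.
  have : leRb n x by apply/leRbP; apply: Nx; rewrite eN.
  by rewrite /gPhi => ->.
have ePsi : Psi x (Pset x y k) = count gPsi (iota 0 M.+1).
  rewrite /Psi -/N0 eN; apply: eq_in_count => n; rewrite mem_iota add0n => nN.
  have : leRb n x by apply/leRbP; apply: Nx; rewrite eN.
  by rewrite /gPsi => ->.
have AB : (count gPhi (iota 0 M.+1) <= count gPsi (iota 0 M.+1))%N.
  apply: count_sub_in => n; rewrite mem_iota add0n => nN /andP [n0 g].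
  rewrite /gPsi n0 /=; apply: dirB (g) => //.
  by apply: Nx; rewrite eN.
have BA : (count gPsi (iota 0 M.+1) <= count gPhi (iota 0 M.+1) +
            count (fun n => (0 < n)%N && bad y M k n) (iota 0 M.+1))%N.
  apply: leq_trans (count_or _ _ _).
  apply: count_sub_in => n; rewrite mem_iota add0n ltnS => nM /andP [n0 g].
  case bn: (bad y M k n); first by rewrite n0 orbT.
  by rewrite /gPhi n0 (dirA x y k M n) ?bn.
have bc := bad_count_R y M k y2 M1.
rewrite ePhi ePsi.
have AB' := INR_leq AB.
have BA' := INR_leq BA; rewrite INR_add in BA'.
rewrite Rabs_left1; last lra.
apply: Rle_trans (_ : INR (count (fun n => (0 < n)%N && bad y M k n) (iota 0 M.+1)) <= _); first lra.
apply: Rle_trans bc _.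
have lx : / 2 < ln x.
  have := ln_le_R 2 x ltac:(lra) x2; have := ln_lt_2; lra.
have lM : ln (INR M) <= ln x by apply: ln_le_R => //; apply: INR_pos.
have S0 : 0 <= SS M by have := ln_nat_ge0 M M1; rewrite /SS; lra.
have S3 : SS M <= 3 * ln x by rewrite /SS; lra.
have K : 7 * SS M ^ 2 <= 63 * ln x ^ 2 by simpl; nra.
have Kp : 0 <= 7 * SS M ^ 2 by simpl; nra.
have Kk : (7 * SS M ^ 2) ^ k <= (63 * ln x ^ 2) ^ k by apply: pow_incr.
have BBle : BB M k <= x * (63 ^ k * ln x ^ (2 * k)%N).
  have -> : 63 ^ k * ln x ^ (2 * k)%N = (63 * ln x ^ 2) ^ k.
    by rewrite Rpow_mult_distr -multE pow_mult.
  rewrite /BB.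
  apply: Rmult_le_compat => //; [exact: pos_INR | apply: pow_le; lra].
have y0 : 0 < y by lra.
have k0 := pos_INR k.
have : INR k * (BB M k * (2 / y)) <= INR k * (x * (63 ^ k * ln x ^ (2 * k)%N) * (2 / y)).
  apply: Rmult_le_compat_l => //; apply: Rmult_le_compat_r => //.
  by apply: Rlt_le; apply: Rdiv_lt_0_compat; lra.
have -> : 2 * INR k * 63 ^ k * (x * ln x ^ (2 * k)%N / y) =
          INR k * (x * (63 ^ k * ln x ^ (2 * k)%N) * (2 / y)) by rewrite /Rdiv; ring.
lra.
Qed.
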